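(* Let ${\cal R}={\cal D}\times[0,N]$ be a cylinder and let ${\mathbf t}$ be a mixed tiling of ${\cal R}$. Let $\kappa$ be the set of unit cubes $[x,x+1]\times[y,y+1]\times[z,z+1]\subseteq{\cal R}$ with $x+y$ even and $\bar\kappa$ the set of those with $x+y$ odd. Then $\operatorname{Tw}_\kappa({\mathbf t})=-\operatorname{Tw}_{\bar\kappa}({\mathbf t})$.
   Context: Unit cubes are $[x,x+1]\times[y,y+1]\times[z,z+1]$, $(x,y,z)\in\mathbb{Z}^3$; the $n$-th floor is $z\in[n,n+1]$. A cylinder is ${\cal R}={\cal D}\times[0,N]$ where ${\cal D}$ is a connected, simply connected finite union of unit squares in the plane. A domino is a union of two unit cubes sharing a face; it is vertical if parallel to the $z$-axis, horizontal otherwise. A horizontal slab is a $2\times2\times1$ box $[x,x+2]\times[y,y+2]\times[z,z+1]$. A mixed tiling of ${\cal R}$ is a tiling of ${\cal R}$ by horizontal slabs and vertical dominoes. Twist of a domino tiling ${\mathbf s}$ of a cubiculated region: for an ordered pair $(d_0,d_1)$ of dominoes of ${\mathbf s}$ with $d_0$ horizontal and parallel to the $y$-axis and $d_1$ vertical, say $d_1$ affects $d_0$ if $d_1$ has a cube on the floor of $d_0$ and the orthogonal projections of the interiors of $d_0,d_1$ onto the plane $x=0$ intersect. In that case the effect is $\pm1$, determined by four binary parameters: whether $d_1$ lies on the $+x$ or $-x$ side of $d_0$; which of the two cubes of $d_0$ (smaller or larger $y$) has the same $y$-range as $d_1$; the parity of the $x$-distance between them; and whether the lower cube of $d_1$ lies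 on the floor of $d_0$ or on the floor below. Changing any one parameter changes the sign, with a fixed global normalization. Otherwise the effect is $0$. $\operatorname{Tw}({\mathbf s})$ is $\frac14$ of the sum of all effects. Transformation: for a set $\kappa$ of cubes of one parity of $x+y$, replace each cube $[x,x+1]\times[y,y+1]\times[z,z+1]$ in $\kappa$ by $\tilde S\times[z,z+1]$, where $\tilde S$ is the square with vertices $(x-\frac12,y+\frac12),(x+\frac12,y-\frac12),(x+\frac32,y+\frac12),(x+\frac12,y+\frac32)$, and delete the other cubes. The union $\tilde{\cal R}_\kappa$ is a cubiculated region after a $45^\circ$ rotation about the $z$-axis and horizontal rescaling. Each horizontal slab of ${\mathbf t}$ contains exactly two cubes of $\kappa$, and it is sent to the domino formed by their two inflated squares. Each vertical domino of ${\mathbf t}$ whose cubes are in $\kappa$ is sent to the vertical domino formed by their inflations. Vertical dominoes with cubes not in $\kappa$ are deleted. This gives a domino tiling $\tilde{\mathbf t}_\kappa$ of $\tilde{\cal R}_\kappa$, and $\operatorname{Tw}_\kappa({\mathbf t}):=\operatorname{Tw}(\tilde{\mathbf t}_\kappa)\in\mathbb{Z}$. *)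

(* Defs.v *)
From Stdlib Require Import ZArith List QArith Relations.
Import ListNotations.
Open Scope Z_scope.

(* The unit square [x,x+1]x[y,y+1] is represented by (x,y). *)
Definition square := (Z * Z)%type.
(* The unit cube [x,x+1]x[y,y+1]x[z,z+1] is represented by (x,y,z). *)
Definition cube := (Z * Z * Z)%type.

Definition cx (c : cube) : Z := fst (fst c).
Definition cy (c : cube) : Z := snd (fst c).
Definition cz (c : cube) : Z := snd c.

(* A domino is a union of two unit cubes sharing a face; it is represented
   by the (unordered) pair of its two cubes. *)
Definition domino := (cube * cube)%type.

Definition share_face (a b : cube) : Prop :=
  Z.abs (cx a - cx b) + Z.abs (cy a - cy b) + Z.abs (cz a - cz b) = 1.

Definition domino_cubes (d : domino) : list cube := [fst d; snd d].

Definition domino_tiling (inR : cube -> Prop) (s : list domino) : Prop :=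
  (forall d, In d s -> share_face (fst d) (snd d)) /\
  NoDup (flat_map domino_cubes s) /\
  (forall c, In c (flat_map domino_cubes s) <-> inR c).

Definition is_hy (d : domino) : bool :=
  (cx (fst d) =? cx (snd d)) && (cz (fst d) =? cz (snd d)) &&
  (Z.abs (cy (fst d) - cy (snd d)) =? 1).

Definition is_vert (d : domino) : bool :=
  (cx (fst d) =? cx (snd d)) && (cy (fst d) =? cy (snd d)) &&
  (Z.abs (cz (fst d) - cz (snd d)) =? 1).

Definition low_y (d : domino) : cube :=
  if cy (fst d) <=? cy (snd d) then fst d else snd d.
Definition low_z (d : domino) : cube :=
  if cz (fst d) <=? cz (snd d) then fst d else snd d.

Definition sgn (b : bool) : Z := if b then -1 else 1.

(* The global normalization of the sign is left as a
   parameter [nrm] (the effect is multiplied by (-1)^nrm): the context only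
   says that the normalization is fixed.  The four binary parameters are:
   side (d1 on the +x side of d0), which cube of d0 (larger y), parity of the
   x-distance, and level (lower cube of d1 on the floor of d0); changing
   any one of them changes the sign. *)
Definition effect (nrm : bool) (d0 d1 : domino) : Z :=
  if is_hy d0 && is_vert d1 then
    let x0 := cx (low_y d0) in let y0 := cy (low_y d0) in
    let z0 := cz (low_y d0) in
    let x1 := cx (low_z d1) in let y1 := cy (low_z d1) in
    let z1 := cz (low_z d1) in
    let on_floor := (z1 =? z0) || (z1 + 1 =? z0) in
    (* projections of the interiors onto the plane x = 0 intersect:
       (y0,y0+2)x(z0,z0+1) meets (y1,y1+1)x(z1,z1+2) *)
    let proj := (y0 <? y1 + 1) && (y1 <? y0 + 2) &&
                (z0 <? z1 + 2) && (z1 <? z0 + 1) in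
    if on_floor && proj then
      sgn nrm * sgn (x0 <? x1) * sgn (y1 =? y0 + 1)
        * sgn (Z.even (x1 - x0)) * sgn (z1 =? z0)
    else 0
  else 0.

Definition twist_sum (nrm : bool) (s : list domino) : Z :=
  fold_right Z.add 0
    (map (fun d0 => fold_right Z.add 0 (map (fun d1 => effect nrm d0 d1) s)) s).

Definition Tw (nrm : bool) (s : list domino) : Q := inject_Z (twist_sum nrm s) / 4.

Definition king_adj (a b : square) : Prop :=
  Z.abs (fst a - fst b) <= 1 /\ Z.abs (snd a - snd b) <= 1.
Definition edge_adj (a b : square) : Prop :=
  Z.abs (fst a - fst b) + Z.abs (snd a - snd b) = 1.

(* The closed union of the squares of D is connected: any two squares of D
   are joined by a chain of squares of D, consecutive ones sharing at least
   a point. *)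
Definition plane_connected (D : list square) : Prop :=
  forall a b, In a D -> In b D ->
    clos_refl_trans square (fun u v => In u D /\ In v D /\ king_adj u v) a b.

(* The complement of the closed union of D in R^2 is connected: every unit
   square not in D is joined, through squares not in D sharing an edge, to a
   square lying strictly to the right of D. (For a connected finite union of
   closed squares this is equivalent to simple connectivity.) *)
Definition plane_simply_connected (D : list square) : Prop :=
  plane_connected D /\
  forall a, ~ In a D ->
    exists b, (forall d, In d D -> fst d < fst b) /\
      clos_refl_trans square (fun u v => ~ In u D /\ ~ In v D /\ edge_adj u v) a b.

Definition in_cylinder (D : list square) (N : nat) (c : cube) : Prop :=
  In (cx c, cy c) D /\ 0 <= cz c < Z.of_nat N.

(* pieces of a mixed tiling; the cube argument is the lower corner *)
Inductive piece :=
  | Slab (c : cube)   (* [x,x+2]x[y,y+2]x[z,z+1] *)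
  | VDom (c : cube).  (* [x,x+1]x[y,y+1]x[z,z+2] *)

Definition piece_cubes (p : piece) : list cube :=
  match p with
  | Slab (x, y, z) => [(x, y, z); (x + 1, y, z); (x, y + 1, z); (x + 1, y + 1, z)]
  | VDom (x, y, z) => [(x, y, z); (x, y, z + 1)]
  end.

Definition mixed_tiling (inR : cube -> Prop) (t : list piece) : Prop :=
  NoDup (flat_map piece_cubes t) /\
  (forall c, In c (flat_map piece_cubes t) <-> inR c).

(* kappa with parity e: cubes with Z.even (x+y) = e *)
Definition in_kappa (e : bool) (c : cube) : bool := Bool.eqb (Z.even (cx c + cy c)) e.

(* The inflated square of (x,y) (x+y of fixed parity) is sent, by the
   rotation (X,Y) |-> ((X+Y)/2, (Y-X)/2) (rotation by -45 degrees composed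
   with rescaling by 1/sqrt 2) followed by a translation, to the unit square
   with lower corner (floor((x+y)/2), floor((y-x)/2)). *)
Definition inflate (c : cube) : cube :=
  (Z.div (cx c + cy c) 2, Z.div (cy c - cx c) 2, cz c).

Definition transform_piece (e : bool) (p : piece) : list domino :=
  match filter (in_kappa e) (piece_cubes p) with
  | [c1; c2] => [(inflate c1, inflate c2)]
  | _ => []
  end.

Definition transform (e : bool) (t : list piece) : list domino :=
  flat_map (transform_piece e) t.

Definition Tw_kappa (nrm : bool) (e : bool) (t : list piece) : Q :=
  Tw nrm (transform e t).

(* Main.v *)
Require Import Defs.
From Stdlib Require Import ZArith List Lia QArith Bool Permutation.
Import ListNotations.
Open Scope Z_scope.

Definition sumZ {A} (l : list A) (f : A -> Z) : Z := fold_right Z.add 0 (map f l).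

Definition par (k : Z) : Z := if Z.even k then 1 else -1.
Definition hh (k : Z) : Z := Z.sgn k * par k.
Definition kap (a b : Z) : Z := hh (a - b) * (hh a + hh b).
Definition ksum' (da db : Z) : Z :=
  kap (- da) (- db) + kap (1 - da) (- db) + kap (- da) (1 - db) + kap (1 - da) (1 - db).
Definition G0 (m n : Z) : Z :=
  if (0 <=? n) && (n <? 2) then sgn (0 <? m) * sgn (n =? 1) * sgn (Z.even m) else 0.

Lemma par_add a b : par (a + b) = par a * par b.
Proof. unfold par; rewrite Z.even_add; destruct (Z.even a), (Z.even b); reflexivity. Qed.
Lemma par_sub a b : par (a - b) = par a * par b.
Proof. unfold par; rewrite Z.even_sub; destruct (Z.even a), (Z.even b); reflexivity. Qed.
Lemma par_opp a : par (- a) = par a.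
Proof. unfold par; rewrite Z.even_opp; reflexivity. Qed.
Lemma par1 : par 1 = -1. Proof. reflexivity. Qed.
Lemma par0 : par 0 = 1. Proof. reflexivity. Qed.

Lemma par_spec m : (exists k, m = 2*k /\ par m = 1) \/ (exists k, m = 2*k+1 /\ par m = -1).
Proof.
  unfold par. destruct (Z.Even_or_Odd m) as [[k Hk]|[k Hk]].
  - left; exists k; split; auto. subst. rewrite Z.even_mul. reflexivity.
  - right; exists k; split; auto. subst. rewrite Z.even_odd. reflexivity.
Qed.

Ltac par_cases m := let k := fresh "k" in let Hk := fresh "Hk" in let Hp := fresh "Hp" in
  destruct (par_spec m) as [[k [Hk Hp]]|[k [Hk Hp]]]; rewrite ?Hp.

Ltac sgn_solve := repeat (match goal with |- context[Z.sgn ?e] =>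
   first [rewrite (Z.sgn_pos e) by lia | rewrite (Z.sgn_neg e) by lia
         | rewrite (Z.sgn_null e) by lia | destruct (Z.compare_spec e 0)] end).

Lemma L1mn m n : ~ (m = 0 /\ n = 0) -> ~ (m = 1 /\ n = 0) -> ksum' (m - n) (m + n) = 0.
Proof.
  intros H1 H2. unfold ksum', kap, hh.
  repeat first [rewrite par_add | rewrite par_sub | rewrite par_opp | rewrite par1 | rewrite par0].
  sgn_solve; par_cases m; par_cases n; simpl; lia.
Qed.

Lemma L2mn m n : ~ (m = 0 /\ (n = 0 \/ n = 1)) -> ksum' (m - n + 1) (m + n) = -2 * G0 m n.
Proof.
  intros H. unfold ksum', kap, hh, G0, sgn.
  assert (Hem : Z.even m = (par m =? 1)) by (unfold par; destruct (Z.even m); reflexivity). rewrite Hem.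
  repeat first [rewrite par_add | rewrite par_sub | rewrite par_opp | rewrite par1 | rewrite par0].
  destruct (Z.leb_spec 0 n), (Z.ltb_spec n 2), (Z.ltb_spec 0 m), (Z.eqb_spec n 1); cbv beta iota delta [andb];
  sgn_solve; par_cases m; par_cases n; simpl; lia.
Qed.

Lemma div2_spec k : k = 2 * (k / 2) + (if Z.even k then 0 else 1).
Proof.
  destruct (Z.Even_or_Odd k) as [[j ->]|[j ->]].
  - replace (Z.even (2 * j)) with true by (rewrite Z.even_mul; reflexivity).
    rewrite (Z.mul_comm 2 j), Z.div_mul by lia. ring.
  - rewrite Z.even_odd. replace (2 * j + 1) with (1 + j * 2) by ring.
    rewrite Z.div_add by lia. change (1 / 2) with 0. ring.
Qed.

Definition lev (z c : Z) : Z := (if c =? z then 1 else 0) - (if c + 1 =? z then 1 else 0).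

Definition Fe (m n z c : Z) : Z :=
  if ((c =? z) || (c + 1 =? z)) && ((0 <=? n) && (n <? 2)) then
    sgn (0 <? m) * sgn (n =? 1) * sgn (Z.even m) * sgn (c =? z) else 0.

Lemma Fe_lev m n z c : Fe m n z c = - lev z c * G0 m n.
Proof.
  unfold Fe, lev, G0.
  destruct (Z.eqb_spec c z); destruct (Z.eqb_spec (c + 1) z); try lia;
  destruct ((0 <=? n) && (n <? 2)); cbn [orb andb sgn]; ring.
Qed.

Ltac dbool := repeat (match goal with
 | |- context[Z.eqb ?a ?b] => destruct (Z.eqb_spec a b)
 | |- context[Z.ltb ?a ?b] => destruct (Z.ltb_spec a b)
 | |- context[Z.leb ?a ?b] => destruct (Z.leb_spec a b)
 end; cbn [fst snd andb orb negb sgn] in *; try (exfalso; lia)).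

Ltac evsimpl H := repeat first [rewrite Z.even_add in H | rewrite Z.even_sub in H].

Lemma eff_core nrm x y z a b c : Z.even (a + b) = negb (Z.even (x + y)) ->
  exists m n, a - x = m - n + 1 /\ b - y = m + n /\
  effect nrm (inflate (x + 1, y, z), inflate (x, y + 1, z)) (inflate (a, b, c), inflate (a, b, c + 1))
   = sgn nrm * Fe m n z c.
Proof.
  intros Hpar.
  pose proof (div2_spec (x + 1 + y)) as H1. pose proof (div2_spec (y - (x + 1))) as H2.
  pose proof (div2_spec (y + 1 - x)) as H3. pose proof (div2_spec (a + b)) as H4.
  pose proof (div2_spec (b - a)) as H5.
  evsimpl Hpar; evsimpl H1; evsimpl H2; evsimpl H3; evsimpl H4; evsimpl H5.
  destruct (Z.even x), (Z.even y), (Z.even a), (Z.even b);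
  cbn [eqb negb Z.even] in Hpar, H1, H2, H3, H4, H5; try discriminate Hpar;
  exists ((a + b) / 2 - (x + 1 + y) / 2), ((b - a) / 2 - (y - (x + 1)) / 2);
  (split; [lia|split; [lia|]]);
  unfold effect, is_hy, is_vert, low_y, low_z, inflate, cx, cy, cz; cbn [fst snd];
  replace (x + (y + 1)) with (x + 1 + y) by ring;
  revert H1 H2 H3 H4 H5;
  generalize ((x + 1 + y) / 2) as X0; generalize ((y - (x + 1)) / 2) as Y0;
  generalize ((y + 1 - x) / 2) as Y0'; generalize ((a + b) / 2) as X1;
  generalize ((b - a) / 2) as Y1; intros; unfold Fe; cbv zeta;
  rewrite !Z.eqb_refl;
  replace (Z.abs (Y0 - Y0') =? 1) with true by (symmetry; apply Z.eqb_eq; lia);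
  replace (Z.abs (c - (c + 1)) =? 1) with true by (symmetry; apply Z.eqb_eq; lia);
  replace (Y0 <=? Y0') with true by (symmetry; apply Z.leb_le; lia);
  replace (c <=? c + 1) with true by (symmetry; apply Z.leb_le; lia);
  cbn [andb fst snd];
  dbool; ring.
Qed.

Lemma L1 da db : Z.even (da + db) = true -> ~ (da = 0 /\ db = 0) -> ~ (da = 1 /\ db = 1) ->
  ksum' da db = 0.
Proof.
  intros He H1 H2. apply Z.even_spec in He. destruct He as [k Hk].
  pose proof (L1mn k (k - da)) as L.
  replace (k - (k - da)) with da in L by ring. replace (k + (k - da)) with db in L by lia.
  apply L; lia.
Qed.

Lemma tp_slab e x y z : transform_piece e (Slab (x, y, z)) =
  if Bool.eqb (Z.even (x + y)) e then [(inflate (x, y, z), inflate (x + 1, y + 1, z))]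
  else [(inflate (x + 1, y, z), inflate (x, y + 1, z))].
Proof.
  unfold transform_piece, in_kappa, piece_cubes, cx, cy. cbn [filter fst snd].
  repeat rewrite Z.even_add. cbn [Z.even].
  destruct (Z.even x), (Z.even y), e; reflexivity.
Qed.

Lemma tp_vdom e x y z : transform_piece e (VDom (x, y, z)) =
  if Bool.eqb (Z.even (x + y)) e then [(inflate (x, y, z), inflate (x, y, z + 1))] else [].
Proof.
  unfold transform_piece, in_kappa, piece_cubes, cx, cy. cbn [filter fst snd].
  destruct (Bool.eqb (Z.even (x + y)) e); reflexivity.
Qed.

Definition E nrm e p0 p1 : Z :=
  sumZ (transform_piece e p0) (fun d0 => sumZ (transform_piece e p1) (fun d1 => effect nrm d0 d1)).

Lemma sumZ_0 {A} (l : list A) : sumZ l (fun _ => 0) = 0.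
Proof. induction l; simpl; auto. Qed.

Lemma sumZ_ext_in {A} (l : list A) f g : (forall a, In a l -> f a = g a) -> sumZ l f = sumZ l g.
Proof.
  induction l; simpl; intros H; auto. unfold sumZ in *; simpl.
  rewrite H by auto. rewrite IHl by auto. reflexivity.
Qed.

Lemma eff_hy0 nrm d0 d1 : is_hy d0 = false -> effect nrm d0 d1 = 0.
Proof. intros H. unfold effect. rewrite H. reflexivity. Qed.

Lemma eff_vert0 nrm d0 d1 : is_vert d1 = false -> effect nrm d0 d1 = 0.
Proof. intros H. unfold effect. rewrite H, andb_false_r. reflexivity. Qed.

Lemma is_vert_flat d : cz (fst d) = cz (snd d) -> is_vert d = false.
Proof. intros H. unfold is_vert. rewrite H, Z.sub_diag. simpl. apply andb_false_r. Qed.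

Lemma is_hy_notflat d : cz (fst d) <> cz (snd d) -> is_hy d = false.
Proof.
  intros H. unfold is_hy. destruct (Z.eqb_spec (cz (fst d)) (cz (snd d))); [contradiction|].
  rewrite andb_false_r. reflexivity.
Qed.

Lemma E_V0 nrm e x y z p1 : E nrm e (VDom (x, y, z)) p1 = 0.
Proof.
  unfold E. rewrite tp_vdom. destruct (Bool.eqb (Z.even (x + y)) e); [|reflexivity].
  cbn [sumZ map fold_right].
  rewrite (sumZ_ext_in _ _ (fun _ => 0)), sumZ_0; [ring|].
  intros d1 _. apply eff_hy0, is_hy_notflat. simpl. lia.
Qed.

Lemma E_SS nrm e x y z x' y' z' : E nrm e (Slab (x, y, z)) (Slab (x', y', z')) = 0.
Proof.
  unfold E. rewrite !tp_slab.
  destruct (Bool.eqb (Z.even (x + y)) e), (Bool.eqb (Z.even (x' + y')) e);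
  cbn [sumZ map fold_right]; rewrite eff_vert0; try reflexivity; apply is_vert_flat; reflexivity.
Qed.

Lemma E2_SV nrm x y z a b c :
  lev z c = 0 \/ ~ In (a, b) [(x, y); (x + 1, y); (x, y + 1); (x + 1, y + 1)] ->
  2 * (E nrm true (Slab (x, y, z)) (VDom (a, b, c)) + E nrm false (Slab (x, y, z)) (VDom (a, b, c)))
  = sgn nrm * lev z c * ksum' (a - x) (b - y).
Proof.
  intros Hov. unfold E. rewrite !tp_slab, !tp_vdom.
  assert (Hxd : is_hy (inflate (x, y, z), inflate (x + 1, y + 1, z)) = false).
  { unfold is_hy, inflate, cx, cy, cz. cbn [fst snd].
    replace (x + 1 + (y + 1)) with ((x + y) + 1 * 2) by ring. rewrite Z.div_add by lia.
    replace ((x + y) / 2 =? (x + y) / 2 + 1) with false by (symmetry; apply Z.eqb_neq; lia).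
    reflexivity. }
  assert (Hovl : lev z c = 0 \/ (~ (a - x = 0 /\ b - y = 0) /\ ~ (a - x = 1 /\ b - y = 0) /\
                                  ~ (a - x = 0 /\ b - y = 1) /\ ~ (a - x = 1 /\ b - y = 1))).
  { destruct Hov as [Hov|Hov]; [left; exact Hov|right].
    repeat split; intros [Ha Hb]; apply Hov;
      [ replace a with x by lia; replace b with y by lia
      | replace a with (x + 1) by lia; replace b with y by lia
      | replace a with x by lia; replace b with (y + 1) by lia
      | replace a with (x + 1) by lia; replace b with (y + 1) by lia ]; simpl; tauto. }
  destruct (Z.even (x + y)) eqn:Ex, (Z.even (a + b)) eqn:Ea; cbn [Bool.eqb sumZ map fold_right].
  - rewrite eff_hy0 by exact Hxd.
    destruct Hovl as [Hl | [H1 [_ [_ H4]]]]; [rewrite Hl; ring|].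
    rewrite L1; [ring| |exact H1|exact H4].
    replace (a - x + (b - y)) with ((a + b) - (x + y)) by ring. rewrite Z.even_sub, Ex, Ea. reflexivity.
  - destruct (eff_core nrm x y z a b c) as [m [n [Hm [Hn He]]]]; [rewrite Ex, Ea; reflexivity|].
    rewrite He, Hm, Hn, Fe_lev.
    destruct Hovl as [Hl | [_ [H2 [H3 _]]]]; [rewrite Hl; ring|].
    rewrite L2mn; [ring|]. lia.
  - destruct (eff_core nrm x y z a b c) as [m [n [Hm [Hn He]]]]; [rewrite Ex, Ea; reflexivity|].
    rewrite He, Hm, Hn, Fe_lev.
    destruct Hovl as [Hl | [_ [H2 [H3 _]]]]; [rewrite Hl; ring|].
    rewrite L2mn; [ring|]. lia.
  - rewrite eff_hy0 by exact Hxd.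
    destruct Hovl as [Hl | [H1 [_ [_ H4]]]]; [rewrite Hl; ring|].
    rewrite L1; [ring| |exact H1|exact H4].
    replace (a - x + (b - y)) with ((a + b) - (x + y)) by ring. rewrite Z.even_sub, Ex, Ea. reflexivity.
Qed.

Lemma sumZ_cons {A} (a : A) l f : sumZ (a :: l) f = f a + sumZ l f.
Proof. reflexivity. Qed.

Lemma sumZ_app {A} (l1 l2 : list A) f : sumZ (l1 ++ l2) f = sumZ l1 f + sumZ l2 f.
Proof. induction l1; simpl; auto. rewrite !sumZ_cons, IHl1. ring. Qed.

Lemma sumZ_flat_map {A B} (g : A -> list B) l f :
  sumZ (flat_map g l) f = sumZ l (fun a => sumZ (g a) f).
Proof. induction l; simpl; auto. rewrite sumZ_app, sumZ_cons, IHl. reflexivity. Qed.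

Lemma sumZ_map {A B} (g : A -> B) l f : sumZ (map g l) f = sumZ l (fun a => f (g a)).
Proof. induction l; simpl; auto. rewrite !sumZ_cons, IHl. reflexivity. Qed.

Lemma sumZ_plus {A} (l : list A) f g : sumZ l (fun a => f a + g a) = sumZ l f + sumZ l g.
Proof. induction l; simpl; auto. rewrite !sumZ_cons, IHl. ring. Qed.

Lemma sumZ_minus {A} (l : list A) f g : sumZ l (fun a => f a - g a) = sumZ l f - sumZ l g.
Proof. induction l; simpl; auto. rewrite !sumZ_cons, IHl. ring. Qed.

Lemma sumZ_mul_l {A} (l : list A) c f : sumZ l (fun a => c * f a) = c * sumZ l f.
Proof. induction l; simpl. unfold sumZ; simpl; ring. rewrite !sumZ_cons, IHl. ring. Qed.

Lemma sumZ_swap {A B} (l1 : list A) (l2 : list B) f :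
  sumZ l1 (fun a => sumZ l2 (fun b => f a b)) = sumZ l2 (fun b => sumZ l1 (fun a => f a b)).
Proof.
  induction l1; simpl.
  - symmetry. apply sumZ_0.
  - rewrite sumZ_cons, IHl1.
    rewrite (sumZ_ext_in l2 (fun b => sumZ (a :: l1) (fun a0 => f a0 b))
              (fun b => f a b + sumZ l1 (fun a0 => f a0 b))) by reflexivity.
    rewrite sumZ_plus. reflexivity.
Qed.

Lemma sumZ_perm {A} (l l' : list A) f : Permutation l l' -> sumZ l f = sumZ l' f.
Proof.
  induction 1; auto.
  - rewrite !sumZ_cons, IHPermutation. reflexivity.
  - rewrite !sumZ_cons. ring.
  - congruence.
Qed.

Lemma sumZ_opp {A} (l : list A) f : sumZ l (fun a => - f a) = - sumZ l f.
Proof. induction l; simpl; auto. rewrite !sumZ_cons, IHl. ring. Qed.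

Lemma sumZ_antisym {A} (l : list A) f :
  (forall a b, In a l -> In b l -> f a b = - f b a) ->
  sumZ l (fun a => sumZ l (fun b => f a b)) = 0.
Proof.
  intros H.
  assert (sumZ l (fun a => sumZ l (fun b => f a b)) =
          - sumZ l (fun a => sumZ l (fun b => f a b))).
  { rewrite sumZ_swap at 1.
    rewrite (sumZ_ext_in l _ (fun b => - sumZ l (fun a => f b a))).
    - apply sumZ_opp.
    - intros b Hb. rewrite <- sumZ_opp. apply sumZ_ext_in. intros a Ha. apply H; auto. }
  lia.
Qed.

Definition cyl (D : list square) (N : nat) : list cube :=
  flat_map (fun s : square => map (fun k => (fst s, snd s, Z.of_nat k)) (seq 0 N)) D.

Lemma cyl_in D N q : In q (cyl D N) <-> in_cylinder D N q.
Proof.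
  destruct q as [[qx qy] qz]. unfold cyl, in_cylinder, cx, cy, cz; cbn [fst snd].
  rewrite in_flat_map. split.
  - intros [[sx sy] [Hs Hq]]. apply in_map_iff in Hq as [k [Hk Hk']].
    apply in_seq in Hk'. cbn [fst snd] in Hk. inversion Hk; subst. split; [auto|lia].
  - intros [Hs Hz]. exists (qx, qy). split; auto. apply in_map_iff. exists (Z.to_nat qz).
    split. cbn [fst snd]. f_equal. lia. apply in_seq. lia.
Qed.

Lemma cyl_nodup D N : NoDup D -> NoDup (cyl D N).
Proof.
  induction 1 as [|s D Hs HD IH]; [constructor|].
  unfold cyl; simpl; fold (cyl D N). apply NoDup_app; auto.
  - apply FinFun.Injective_map_NoDup; [|apply seq_NoDup]. intros k k' Hk. inversion Hk. lia.
  - intros q Hq1 Hq2. apply in_map_iff in Hq1 as [k [Hk _]]. subst q.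
    apply cyl_in in Hq2. unfold in_cylinder, cx, cy in Hq2. cbn [fst snd] in Hq2.
    destruct s. apply Hs. tauto.
Qed.

Lemma count_seq N c : sumZ (seq 0 N) (fun k => if c =? Z.of_nat k then 1 else 0) =
  if (0 <=? c) && (c <? Z.of_nat N) then 1 else 0.
Proof.
  induction N.
  - change (Z.of_nat 0) with 0. change (sumZ (seq 0 0) (fun k => if c =? Z.of_nat k then 1 else 0)) with 0.
    destruct (Z.leb_spec 0 c), (Z.ltb_spec c 0); simpl; lia.
  - rewrite seq_S, sumZ_app, IHN. cbn [sumZ map fold_right Nat.add].
    rewrite Nat2Z.inj_succ.
    destruct (Z.leb_spec 0 c), (Z.ltb_spec c (Z.of_nat N)), (Z.ltb_spec c (Z.succ (Z.of_nat N))),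
      (Z.eqb_spec c (Z.of_nat N)); simpl; lia.
Qed.

Lemma lev_seq N c : 0 <= c -> c + 1 < Z.of_nat N -> sumZ (seq 0 N) (fun k => lev (Z.of_nat k) c) = 0.
Proof.
  intros H1 H2. unfold lev.
  rewrite (sumZ_minus _ (fun k => if c =? Z.of_nat k then 1 else 0)
                        (fun k => if c + 1 =? Z.of_nat k then 1 else 0)).
  rewrite (count_seq N c), (count_seq N (c + 1)).
  destruct (Z.leb_spec 0 c), (Z.ltb_spec c (Z.of_nat N)), (Z.leb_spec 0 (c + 1)),
    (Z.ltb_spec (c + 1) (Z.of_nat N)); simpl; lia.
Qed.

Definition psi (v q : cube) : Z := kap (cx q - cx v) (cy q - cy v) * lev (cz q) (cz v).

Lemma psi_cyl D N a b c : 0 <= c -> c + 1 < Z.of_nat N -> sumZ (cyl D N) (psi (a, b, c)) = 0.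
Proof.
  intros H1 H2. unfold cyl. rewrite sumZ_flat_map.
  rewrite (sumZ_ext_in D _ (fun _ => 0)); [apply sumZ_0|]. intros s _. rewrite sumZ_map.
  unfold psi, cx, cy, cz; cbn [fst snd].
  rewrite (sumZ_mul_l _ (kap (fst s - a) (snd s - b)) (fun k => lev (Z.of_nat k) c)).
  rewrite lev_seq by auto. ring.
Qed.

Lemma kap_sym p q : kap (- p) (- q) = kap p q.
Proof.
  unfold kap, hh. replace (- p - - q) with (- (p - q)) by ring.
  rewrite !Z.sgn_opp, !par_opp. ring.
Qed.

Definition G nrm (p0 p1 : piece) : Z :=
  match p0, p1 with
  | Slab (x, y, z), VDom (a, b, c) => sgn nrm * lev z c * ksum' (a - x) (b - y)
  | _, _ => 0
  end.
Definition Ap (p0 p1 : piece) : Z :=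
  match p1 with VDom v => sumZ (piece_cubes p0) (psi v) | Slab _ => 0 end.
Definition Bp (p0 p1 : piece) : Z :=
  match p0, p1 with VDom u, VDom v => sumZ (piece_cubes (VDom u)) (psi v) | _, _ => 0 end.

Lemma G_AB nrm p0 p1 : G nrm p0 p1 = sgn nrm * (Ap p0 p1 - Bp p0 p1).
Proof.
  destruct p0 as [[[x y] z]|[[x y] z]], p1 as [[[a b] c]|[[a b] c]];
    cbn [G Ap Bp]; try ring.
  unfold psi, ksum', sumZ, piece_cubes, cx, cy, cz; cbn [map fold_right fst snd].
  replace (- (a - x)) with (x - a) by ring. replace (- (b - y)) with (y - b) by ring.
  replace (1 - (a - x)) with (x + 1 - a) by ring. replace (1 - (b - y)) with (y + 1 - b) by ring.
  ring.
Qed.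

Lemma Bp_anti p0 p1 : Bp p0 p1 = - Bp p1 p0.
Proof.
  destruct p0 as [[[x y] z]|[[x y] z]], p1 as [[[a b] c]|[[a b] c]]; cbn [Bp]; try ring.
  unfold psi, sumZ, piece_cubes, cx, cy, cz; cbn [map fold_right fst snd].
  replace (a - x) with (- (x - a)) by ring. replace (b - y) with (- (y - b)) by ring.
  rewrite kap_sym. unfold lev.
  destruct (Z.eqb_spec c z), (Z.eqb_spec (c + 1) z), (Z.eqb_spec z c), (Z.eqb_spec (z + 1) c),
    (Z.eqb_spec c (z + 1)), (Z.eqb_spec (c + 1) (z + 1)), (Z.eqb_spec z (c + 1)),
    (Z.eqb_spec (z + 1) (c + 1)); lia.
Qed.

Lemma nodup_app_disj {A} (l1 l2 : list A) q : NoDup (l1 ++ l2) -> In q l1 -> In q l2 -> False.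
Proof.
  induction l1 as [|a l1 IH]; simpl; intros Hnd H1 H2; [auto|].
  inversion Hnd; subst. destruct H1 as [<-|H1].
  - apply H3. apply in_or_app. right. auto.
  - eapply IH; eauto.
Qed.

Lemma nodup_flat_disj {A B} (f : A -> list B) l x y q :
  NoDup (flat_map f l) -> In x l -> In y l -> x <> y -> In q (f x) -> In q (f y) -> False.
Proof.
  induction l as [|a l IH]; simpl; intros Hnd Hx Hy Hxy Hqx Hqy; [auto|].
  destruct Hx as [<-|Hx], Hy as [<-|Hy].
  - auto.
  - eapply nodup_app_disj; eauto. apply in_flat_map; eauto.
  - eapply nodup_app_disj; eauto. apply in_flat_map; eauto.
  - eapply IH; eauto. eapply NoDup_app_remove_l; eauto.
Qed.

Lemma pair_E2 nrm t p0 p1 : NoDup (flat_map piece_cubes t) -> In p0 t -> In p1 t ->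
  2 * (E nrm true p0 p1 + E nrm false p0 p1) = G nrm p0 p1.
Proof.
  intros Hnd H0 H1.
  destruct p0 as [[[x y] z]|[[x y] z]], p1 as [[[a b] c]|[[a b] c]].
  - rewrite !E_SS. reflexivity.
  - rewrite E2_SV; [reflexivity|].
    destruct (Z.eq_dec (lev z c) 0) as [Hl|Hl]; [left; auto|right]. intros Hin.
    assert (Hc : c = z \/ c + 1 = z)
      by (unfold lev in Hl; destruct (Z.eqb_spec c z), (Z.eqb_spec (c + 1) z); lia).
    apply (nodup_flat_disj piece_cubes t (Slab (x, y, z)) (VDom (a, b, c)) (a, b, z)); auto;
      [discriminate| |].
    + simpl in Hin |- *.
      destruct Hin as [H|[H|[H|[H|[]]]]]; inversion H; subst; tauto.
    + destruct Hc as [->| <-]; simpl; auto.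
  - rewrite !E_V0. reflexivity.
  - rewrite !E_V0. reflexivity.
Qed.

Lemma cancel nrm D N t : NoDup D -> mixed_tiling (in_cylinder D N) t ->
  sumZ t (fun p0 => sumZ t (fun p1 => G nrm p0 p1)) = 0.
Proof.
  intros HD [Hnd Hcov].
  rewrite (sumZ_ext_in t _ (fun p0 => sgn nrm * (sumZ t (fun p1 => Ap p0 p1) - sumZ t (fun p1 => Bp p0 p1)))).
  2: { intros p0 _. rewrite <- sumZ_minus, <- sumZ_mul_l. apply sumZ_ext_in. intros; apply G_AB. }
  rewrite sumZ_mul_l, sumZ_minus.
  rewrite (sumZ_antisym t Bp) by (intros; apply Bp_anti).
  rewrite (sumZ_swap t t Ap).
  rewrite (sumZ_ext_in t (fun b => sumZ t (fun a => Ap a b)) (fun _ => 0)).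
  { rewrite sumZ_0. ring. }
  intros p1 Hp1. destruct p1 as [s|[[a b] c]]; cbn [Ap].
  - apply sumZ_0.
  - rewrite <- (sumZ_flat_map piece_cubes t (psi (a, b, c))).
    assert (Hperm : Permutation (flat_map piece_cubes t) (cyl D N)).
    { apply NoDup_Permutation; auto. apply cyl_nodup; auto.
      intros q. rewrite cyl_in. apply Hcov. }
    rewrite (sumZ_perm _ _ _ Hperm).
    assert (Hb1 : in_cylinder D N (a, b, c)).
    { apply Hcov. apply in_flat_map. exists (VDom (a, b, c)). simpl. auto. }
    assert (Hb2 : in_cylinder D N (a, b, c + 1)).
    { apply Hcov. apply in_flat_map. exists (VDom (a, b, c)). simpl. auto. }
    unfold in_cylinder, cz in Hb1, Hb2. cbn [snd] in Hb1, Hb2.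
    apply psi_cyl; lia.
Qed.

Lemma twist_transform nrm e t :
  twist_sum nrm (transform e t) = sumZ t (fun p0 => sumZ t (fun p1 => E nrm e p0 p1)).
Proof.
  change (twist_sum nrm (transform e t)) with
    (sumZ (transform e t) (fun d0 => sumZ (transform e t) (fun d1 => effect nrm d0 d1))).
  unfold transform. rewrite sumZ_flat_map. apply sumZ_ext_in. intros p0 _.
  rewrite (sumZ_ext_in (transform_piece e p0) _
    (fun d0 => sumZ t (fun p1 => sumZ (transform_piece e p1) (fun d1 => effect nrm d0 d1))))
    by (intros; apply sumZ_flat_map).
  rewrite sumZ_swap. reflexivity.
Qed.

Theorem lemma4p1 (nrm : bool) (D : list square) (N : nat) (t : list piece) :
  NoDup D ->
  plane_simply_connected D ->
  mixed_tiling (in_cylinder D N) t ->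
  (Tw_kappa nrm true t == - Tw_kappa nrm false t)%Q.
Proof.
  intros HD _ Ht.
  assert (H2 : 2 * (twist_sum nrm (transform true t) + twist_sum nrm (transform false t)) = 0).
  { rewrite !twist_transform. rewrite <- sumZ_plus, <- sumZ_mul_l.
    rewrite <- (cancel nrm D N t HD Ht). apply sumZ_ext_in. intros p0 Hp0.
    rewrite <- sumZ_plus, <- sumZ_mul_l. apply sumZ_ext_in. intros p1 Hp1.
    apply (pair_E2 nrm t); auto. destruct Ht; auto. }
  unfold Tw_kappa, Tw.
  replace (twist_sum nrm (transform true t)) with (- twist_sum nrm (transform false t)) by lia.
  rewrite inject_Z_opp. field.
Qed.
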